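(* Let $G$, $z$, $g_1,\dots,g_{2r}$ be as in the context. Every element $g\in G\setminus\{1,z\}$ can be written as $g=z^{j}g_{s_1}g_{s_2}\cdots g_{s_t}$ with $j\in\{0,1\}$ and $1\le s_1<\dots<s_t\le 2r$, uniquely. For $\sigma\in S_{2r}$ define $\tilde\sigma:G\to G$ by $1^{\tilde\sigma}=1$, $z^{\tilde\sigma}=z$ and $(z^{j}g_{s_1}\cdots g_{s_t})^{\tilde\sigma}=z^{j}g_{s_1^{\sigma}}\cdots g_{s_t^{\sigma}}$. Then each $\tilde\sigma$ is an automorphism of $G$, and the map $\sigma\mapsto\tilde\sigma$ is an injective group homomorphism $S_{2r}\to\mathrm{Aut}(G)$; in particular $S_{2r}$ embeds in $\mathrm{Aut}(G)$ as a group of automorphisms permuting $\{g_1,\dots,g_{2r}\}$.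
   Context: Let $r\ge1$ and $G$ an extraspecial $2$-group of order $2^{2r+1}$ (i.e. $|Z(G)|=2$ and $G/Z(G)\cong\mathbb{Z}_2^{2r}$), with $Z=Z(G)=\langle z\rangle$. Identify $Z$ with $\mathbb{F}_2$ and view $G/Z$ as an $\mathbb{F}_2$-space with quadratic form $Q(Zx)=x^2$ and associated bilinear form $B(Zx,Zy)=[x,y]$. Assume $G/Z$ has a symmetric basis $\{Zg_1,\dots,Zg_{2r}\}$, i.e. $Q(Zg_i)=0$ for all $i$ and $B(Zg_i,Zg_j)=1$ for $i\ne j$; thus $g_i^2=1$ and $g_ig_j=g_jg_iz$ for $i\ne j$. Permutations act on the right. *)

(* Defs.v *)
From HB Require Import structures.
From mathcomp Require Import all_boot all_fingroup all_solvable.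
Set Implicit Arguments. Unset Strict Implicit. Unset Printing Implicit Defensive.
Local Open Scope group_scope.

(* The normal-form word  z^j g_{s_1} ... g_{s_t}  with s_1 < ... < s_t the
   elements of S (the big product over ordinals runs in increasing order). *)
Definition ext_word (gT : finGroupType) (n : nat) (z : gT) (g : 'I_n -> gT)
    (j : bool) (S : {set 'I_n}) : gT :=
  z ^+ j * \prod_(s < n | s \in S) g s.

(* On elements having a normal form it uses (a chosen) normal form; the theorem
   asserts uniqueness of normal forms, so this is the paper's map on G.
   Outside the set of words it is the identity (irrelevant for G). *)
Definition sigma_tilde (gT : finGroupType) (n : nat) (z : gT) (g : 'I_n -> gT)
    (sigma : 'S_n) (x : gT) : gT :=
  if [pick p : bool * {set 'I_n} | x == ext_word z g p.1 p.2] is Some p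
  then ext_word z (fun s => g (sigma s)) p.1 p.2
  else x.

(* Main.v *)
Require Import Defs.
From HB Require Import structures.
From mathcomp Require Import all_boot all_fingroup all_solvable.
Local Open Scope group_scope.

Set Implicit Arguments. Unset Strict Implicit. Unset Printing Implicit Defensive.

Section NF.
Variables (gT : finGroupType) (n : nat) (z : gT).
Hypothesis z2 : z ^+ 2 = 1.

Definition nrel (h : 'I_n -> gT) :=
  [/\ forall i, h i ^+ 2 = 1, forall i j, i != j -> h i * h j = h j * h i * z
    & forall i, commute z (h i)].

Lemma czX h (hr : nrel h) c i : commute (z ^+ c) (h i).
Proof. by case: hr => _ _ hc; apply/commute_sym/commuteX/commute_sym. Qed.

Lemma cz_prod h (hr : nrel h) c (s : seq 'I_n) (P : pred 'I_n) :
  commute (z ^+ c) (\prod_(i <- s | P i) h i).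
Proof.
apply: (big_ind (commute (z ^+ c))); first exact: commute1.
  by move=> x y; apply: commuteM.
by move=> i _; apply: czX.
Qed.

Lemma comm_seq h (hr : nrel h) t (s : seq 'I_n) : t \notin s ->
  \prod_(i <- s) h i * h t = z ^+ size s * h t * \prod_(i <- s) h i.
Proof.
elim: s => [|x s IH] /=; first by rewrite big_nil expg0 !mul1g mulg1.
rewrite inE negb_or => /andP[ntx nts].
rewrite big_cons -mulgA IH // !mulgA -(czX hr (size s) x).
have [_ hm hc] := hr.
rewrite -(mulgA (z ^+ size s)) hm; last by rewrite eq_sym.
rewrite -(commuteM (hc t) (hc x)) expgSr !mulgA.
by [].
Qed.

Lemma perm_prod (s1 s2 : seq 'I_n) : perm_eq s1 s2 -> uniq s2 ->
  exists c : nat, forall h, nrel h ->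
    \prod_(i <- s2) h i = z ^+ c * \prod_(i <- s1) h i.
Proof.
elim: s1 s2 => [|x s1 IH] s2 hp us2.
  rewrite perm_sym in hp; move/perm_nilP: hp => ->.
  by exists 0 => h _; rewrite expg0 mul1g.
have xs2 : x \in s2 by rewrite -(perm_mem hp) mem_head.
move: hp us2; case/splitPr: xs2 => a b hp us2.
have hp' : perm_eq (x :: s1) (x :: (a ++ b)).
  by rewrite (perm_trans hp) // -cat1s perm_catCA.
have u' : uniq (x :: a ++ b) by rewrite -(perm_uniq hp') (perm_uniq hp).
move: u' => /= /andP[xab uab].
rewrite perm_cons in hp'.
have [c1 Hc1] := IH _ hp' uab.
exists (size a + c1) => h hr.
rewrite big_cat big_cons /= mulgA comm_seq //; last first.
  by apply: contra xab; rewrite mem_cat => ->.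
rewrite big_cons -!mulgA -big_cat Hc1 // !mulgA.
by rewrite -(mulgA _ (h x)) -(czX hr c1 x) expgD !mulgA.
Qed.

Definition es (S : {set 'I_n}) := [seq x <- index_enum 'I_n | x \in S].

Lemma esE (h : 'I_n -> gT) (S : {set 'I_n}) : \prod_(i < n | i \in S) h i = \prod_(i <- es S) h i.
Proof. by rewrite big_filter. Qed.

Lemma es_uniq (S : {set 'I_n}) : uniq (es S).
Proof. by rewrite filter_uniq // index_enum_uniq. Qed.

Lemma mem_es (S : {set 'I_n}) x : (x \in es S) = (x \in S).
Proof. by rewrite mem_filter mem_index_enum andbT. Qed.

Lemma one_nf (S : {set 'I_n}) t : exists (c : nat) (S' : {set 'I_n}),
  forall h, nrel h ->
  \prod_(i < n | i \in S) h i * h t = z ^+ c * \prod_(i < n | i \in S') h i.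
Proof.
have [tS | ntS] := boolP (t \in S).
  have hp : perm_eq (rcons (es (S :\ t)) t) (es S).
    apply: uniq_perm; first by rewrite rcons_uniq es_uniq mem_es in_setD1 eqxx.
      exact: es_uniq.
    by move=> y; rewrite mem_rcons inE !mem_es in_setD1; case: eqP => [->|].

  have [c Hc] := perm_prod hp (es_uniq S).
  exists c, (S :\ t) => h hr.
  rewrite !esE Hc // -cats1 big_cat big_seq1 -!mulgA.
  by case: hr => hsq _ _; move: (hsq t); rewrite expgS expg1 => ->; rewrite mulg1.
have hp : perm_eq (es (t |: S)) (rcons (es S) t).
  apply: uniq_perm; first exact: es_uniq.
    by rewrite rcons_uniq es_uniq mem_es ntS.
  by move=> y; rewrite mem_rcons inE !mem_es in_setU1.
have us : uniq (rcons (es S) t) by rewrite rcons_uniq mem_es ntS es_uniq.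
have [c Hc] := perm_prod hp us.
exists c, (t |: S) => h hr.
by rewrite !esE -Hc // -cats1 big_cat big_seq1.
Qed.

Lemma seq_nf (s : seq 'I_n) : exists (c : nat) (S' : {set 'I_n}),
  forall h, nrel h -> \prod_(i <- s) h i = z ^+ c * \prod_(i < n | i \in S') h i.
Proof.
elim/last_ind: s => [|s x [c [S' H]]].
  by exists 0, set0 => h _; rewrite big_nil expg0 mul1g big_pred0 // => i; rewrite inE.
have [c1 [S1 H1]] := one_nf S' x.
exists (c + c1), S1 => h hr.
by rewrite -cats1 big_cat big_seq1 /= H // -mulgA H1 // mulgA expgD.
Qed.

Lemma word_mul j1 S1 j2 S2 : exists j S, forall h, nrel h ->
  ext_word z h j1 S1 * ext_word z h j2 S2 = ext_word z h j S.
Proof.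
have [c [S Hc]] := seq_nf (es S1 ++ es S2).
exists (odd (j1 + j2 + c)), S => h hr.
rewrite /ext_word -modn2 expg_mod // !expgD -!mulgA -Hc // big_cat -!esE /=.
by rewrite (mulgA _ (z ^+ j2)) -(cz_prod hr j2) -!mulgA.
Qed.
End NF.
Unset Implicit Arguments.

Theorem theorem4p1 (gT : finGroupType) (G : {group gT}) (r : nat) (z : gT)
    (g : 'I_(2 * r) -> gT)
    (hr : (1 <= r)%N)
    (hG : #|G| = (2 ^ (2 * r).+1)%N)
    (hZ : 'Z(G) = <[z]>) (hz : #[z] = 2%N)
    (hab : 2.-abelem (G / 'Z(G)))
    (hgG : forall i, g i \in G)
    (hsq : forall i, g i ^+ 2 = 1)
    (hcomm : forall i j, i != j -> [~ g i, g j] = z)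
    (hspan : <<[set coset 'Z(G) (g i) | i : 'I_(2 * r)]>> = G / 'Z(G))
    (hindep : forall S : {set 'I_(2 * r)},
        \prod_(i < 2 * r | i \in S) coset 'Z(G) (g i) = 1 -> S = set0) :
  (* unique normal form *)
  (forall x, x \in G -> exists j S, x = ext_word z g j S) /\
  (forall j1 S1 j2 S2, ext_word z g j1 S1 = ext_word z g j2 S2 ->
       j1 = j2 /\ S1 = S2) /\
  (* each sigma~ is an automorphism of G *)
  (forall sigma : 'S_(2 * r),
     exists2 a : {perm gT}, a \in Aut G & {in G, a =1 sigma_tilde z g sigma}) /\
  (* sigma |-> sigma~ is a homomorphism (right actions) *)
  (forall sigma tau : 'S_(2 * r), {in G, forall x,
     sigma_tilde z g (sigma * tau) x = sigma_tilde z g tau (sigma_tilde z g sigma x)}) /\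
  (* injective *)
  (forall sigma tau : 'S_(2 * r),
     {in G, sigma_tilde z g sigma =1 sigma_tilde z g tau} -> sigma = tau) /\
  (* permutes the g_i *)
  (forall (sigma : 'S_(2 * r)) i, sigma_tilde z g sigma (g i) = g (sigma i)).

Proof.
have zZ : z \in 'Z(G) by rewrite hZ cycle_id.
have zG : z \in G := subsetP (center_sub G) z zZ.
have z2 : z ^+ 2 = 1 by rewrite -hz expg_order.
have zn1 : z != 1 by rewrite -order_eq1 hz.
have cz : forall x, x \in G -> commute z x.
  by move=> x xG; case/centerP: zZ => _ /(_ x xG).
have w0 : forall h : 'I_(2 * r) -> gT, ext_word z h false set0 = 1.
  by move=> h; rewrite /ext_word expg0 mul1g big_pred0 // => i; rewrite inE.
have w1 : forall h : 'I_(2 * r) -> gT, ext_word z h true set0 = z.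
  by move=> h; rewrite /ext_word expg1 big_pred0 ?mulg1 // => i; rewrite inE.
have wk : forall (h : 'I_(2 * r) -> gT) k, ext_word z h false [set k] = h k.
  by move=> h k; rewrite /ext_word expg0 mul1g big_set1.
have wG : forall h : 'I_(2 * r) -> gT, (forall i, h i \in G) ->
    forall j S, ext_word z h j S \in G.
  by move=> h hG' j S; rewrite groupM ?groupX // group_prod.
have cardT : #|[set: bool * {set 'I_(2 * r)}]| = #|G|.
  rewrite cardsT card_prod card_bool hG expnS; congr (_ * _)%N.
  by rewrite -(cardsT {set 'I_(2 * r)}) -powersetT card_powerset cardsT card_ord.
have key : forall h : 'I_(2 * r) -> gT, (forall i, h i \in G) ->
    (forall i, h i ^+ 2 = 1) -> (forall i j, i != j -> [~ h i, h j] = z) ->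
    (forall i, exists k, h k = g i) ->
    (forall x, x \in G -> exists j S, x = ext_word z h j S) /\
    (forall j1 S1 j2 S2, ext_word z h j1 S1 = ext_word z h j2 S2 ->
       j1 = j2 /\ S1 = S2).
  move=> h hG' hsq' hc' hs.
  have hr' : nrel z h.
    by split => // [i j ij|i]; [rewrite commgC hc' | apply: cz].
  pose f := fun p : bool * {set 'I_(2 * r)} => ext_word z h p.1 p.2.
  have gW : group_set (f @: setT).
    apply/group_setP; split.
      by apply/imsetP; exists (false, set0); rewrite ?inE // /f /= w0.
    move=> x y /imsetP[p _ ->] /imsetP[q _ ->].
    have [j [S HS]] := word_mul z2 p.1 p.2 q.1 q.2.
    by rewrite /f HS //; apply/imsetP; exists (j, S); rewrite ?inE.
  pose WG := Group gW.
  have WsubG : WG \subset G.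
    by apply/subsetP => x /imsetP[p _ ->]; exact: wG.
  have ZW : 'Z(G) \subset WG.
    rewrite hZ cycle_subG; apply/imsetP; exists (true, set0); rewrite ?inE //.
    by rewrite /f /= w1.
  have GW : G \subset WG.
    rewrite -(quotientSGK _ ZW); last exact: normal_norm (center_normal G).
    rewrite -hspan gen_subG; apply/subsetP => _ /imsetP[i _ ->].
    have [k <-] := hs i; apply: mem_quotient.
    by apply/imsetP; exists (false, [set k]); rewrite ?inE // /f /= wk.
  have WGE : f @: setT = G by apply/eqP; rewrite eqEsubset WsubG GW.
  split.
    move=> x; rewrite -WGE => /imsetP[p _ ->]; by exists p.1, p.2.
  have /imset_injP Hinj : #|f @: setT| == #|[set: bool * {set 'I_(2 * r)}]|.
    by rewrite WGE cardT.
  move=> j1 S1 j2 S2 E.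
  by case: (Hinj (j1, S1) (j2, S2) (in_setT _) (in_setT _) E) => -> ->.
have [surjg injg] := key g hgG hsq hcomm (fun i => ex_intro _ i erefl).
have keys : forall sigma : 'S_(2 * r),
    (forall x, x \in G -> exists j S, x = ext_word z (fun s => g (sigma s)) j S) /\
    (forall j1 S1 j2 S2, ext_word z (fun s => g (sigma s)) j1 S1 =
       ext_word z (fun s => g (sigma s)) j2 S2 -> j1 = j2 /\ S1 = S2).
  move=> sigma; apply: key => //.
  - by move=> i j ij; rewrite hcomm // (inj_eq perm_inj).
  - by move=> i; exists (sigma^-1 i); rewrite permKV.
have hrs : forall sigma : 'S_(2 * r), nrel z (fun s => g (sigma s)).
  move=> sigma; split => // [i j ij|i]; last exact: cz.
  by rewrite commgC hcomm // (inj_eq perm_inj).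
have hrg : nrel z g.
  by split => // [i j ij|i]; [rewrite commgC hcomm | apply: cz].
have stE : forall (sigma : 'S_(2 * r)) j S,
    sigma_tilde z g sigma (ext_word z g j S) = ext_word z (fun s => g (sigma s)) j S.
  move=> sigma j S; rewrite /sigma_tilde; case: pickP => [p /eqP Hp | H].
    by case: (injg _ _ _ _ Hp) => -> ->.
  by have := H (j, S); rewrite /= eqxx.
have stout : forall (sigma : 'S_(2 * r)) x, x \notin G -> sigma_tilde z g sigma x = x.
  move=> sigma x xnG; rewrite /sigma_tilde; case: pickP => [p /eqP Hp | //].
  by rewrite Hp wG in xnG.
have fG : forall (sigma : 'S_(2 * r)) x, x \in G -> sigma_tilde z g sigma x \in G.
  move=> sigma x /surjg[j [S ->]]; rewrite stE; exact: wG.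
have fM : forall (sigma : 'S_(2 * r)) x y, x \in G -> y \in G ->
    sigma_tilde z g sigma (x * y) = sigma_tilde z g sigma x * sigma_tilde z g sigma y.
  move=> sigma x y /surjg[j1 [S1 ->]] /surjg[j2 [S2 ->]].
  have [j [S HS]] := word_mul z2 j1 S1 j2 S2.
  by rewrite HS // !stE HS.
have fg : forall (sigma : 'S_(2 * r)) k, sigma_tilde z g sigma (g k) = g (sigma k).
  by move=> sigma k; rewrite -(wk g k) stE wk.
have f1 : forall sigma : 'S_(2 * r), sigma_tilde z g sigma 1 = 1.
  by move=> sigma; rewrite -(w0 g) stE w0.
have fz : forall sigma : 'S_(2 * r), sigma_tilde z g sigma z = z.
  by move=> sigma; rewrite -[X in sigma_tilde _ _ _ X](w1 g) stE w1.
split; first exact: surjg.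
split; first exact: injg.
split.
  move=> sigma.
  have finj : injective (sigma_tilde z g sigma).
    move=> x y E.
    have [xG | xnG] := boolP (x \in G); have [yG | ynG] := boolP (y \in G).
    - move: E; case/surjg: xG => [j1 [S1 ->]]; case/surjg: yG => [j2 [S2 ->]].
      by rewrite !stE => /(proj2 (keys sigma)) [-> ->].
    - by move: (fG sigma x xG); rewrite E stout // (negbTE ynG).
    - by move: (fG sigma y yG); rewrite -E stout // (negbTE xnG).
    - by rewrite !stout in E.
  exists (perm finj); last by move=> x _; rewrite permE.
  rewrite inE; apply/andP; split.
    apply/subsetP => x; rewrite inE permE; apply: contraR => xnG.
    by rewrite stout ?eqxx.
  by apply/morphicP => x y xG yG; rewrite !permE fM.
split.
  move=> sigma tau x /surjg[j [S ->]].
  rewrite !stE /ext_word.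
  have fX : sigma_tilde z g tau (z ^+ j) = z ^+ j.
    by case: j; rewrite ?expg1 ?expg0 ?fz ?f1.
  rewrite fM ?groupX ?group_prod // fX; congr (_ * _).
  have [_ ->] : \prod_(s in S) g (sigma s) \in G /\
      sigma_tilde z g tau (\prod_(s in S) g (sigma s)) = \prod_(s in S) g ((sigma * tau) s).
    apply: (big_rec2 (fun a b => a \in G /\ sigma_tilde z g tau a = b)).
      by rewrite group1 f1.
    by move=> i a b _ [aG <-]; rewrite groupM // fM // fg permM.
  by [].
split.
  move=> sigma tau H; apply/permP => i.
  have := H (g i) (hgG i); rewrite !fg.
  rewrite -(wk g (sigma i)) -(wk g (tau i)) => /injg [_ /set1_inj].
  by [].
by move=> sigma i; rewrite fg.
Qed.
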